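(* There is an absolute constant $c>0$ such that the following holds. Let $J\ge 1$ and let $\mathbf{b}=(b_1,\dots,b_J)$ be non-negative integers with $b_1+\cdots+b_J=J$. Then \[ \sum_{\mathbf{d}\in\mathcal{D}(\mathbf{b})} \frac{|\mathscr{L}^*(\mathbf{d})|}{d_1\cdots d_J} \ge c\,\frac{(2\log 2)^J}{\sum_{i=1}^J 2^{b_1+\cdots+b_i-i}}. \]
   Context: $\mathcal{D}(\mathbf{b}) = \prod_{i=1}^J \{2^{i-1},2^{i-1}+1,\dots,2^i-1\}^{b_i}$, i.e. the set of $J$-tuples $\mathbf{d}=(d_1,\dots,d_J)$ of positive integers whose first $b_1$ coordinates lie in $[1,1]$, next $b_2$ coordinates lie in $[2,3]$, ..., last $b_J$ coordinates lie in $[2^{J-1},2^J-1]$. For a tuple $\mathbf{a}=(a_1,\dots,a_r)$, $\mathscr{L}^*(\mathbf{a}) = \{\sum_{i\in I} a_i : I\subset\{1,\dots,r\}\}$ is its set of subset sums, and $|\cdot|$ denotes cardinality. Logarithms are natural. *)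

(* Defs.v *)
From Stdlib Require Import Reals.
From mathcomp Require Import all_boot all_order all_algebra.
From mathcomp Require Import Rstruct.
Set Implicit Arguments. Unset Strict Implicit. Unset Printing Implicit Defensive.
Import Order.TTheory GRing.Theory Num.Theory.

(* Partial sum b_1 + ... + b_i (0-indexed b : 'I_J -> nat, i counts terms). *)
Definition psum (J : nat) (b : 'I_J -> nat) (i : nat) : nat :=
  \sum_(j < J | (j < i)%N) b j.

(* d lies in D(b): coordinate k (0-indexed) belongs to block i (0-indexed),
   i.e. psum b i <= k < psum b (i+1), and then 2^i <= d_k <= 2^(i+1) - 1.
   Every element of D(b) has all coordinates < 2^J, so the values of d are
   taken in 'I_(2^J) without loss. *)
Definition inD (J : nat) (b : 'I_J -> nat) (d : {ffun 'I_J -> 'I_(2 ^ J)}) : bool :=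
  [forall i : 'I_J, forall k : 'I_J,
     ((psum b i <= k) && (k < psum b i.+1))%N ==>
     ((2 ^ i <= d k) && (d k < 2 ^ i.+1))%N].

Definition subset_sums (J : nat) (d : 'I_J -> nat) : seq nat :=
  undup [seq (\sum_(i in A) d i)%N | A : {set 'I_J} <- enum {set 'I_J}].

(* Main.v *)
Require Import Defs.
From Stdlib Require Import Reals Lra.
From mathcomp Require Import all_boot all_order all_algebra.
From mathcomp Require Import Rstruct.
Import Order.TTheory GRing.Theory Num.Theory.

Section StdLn.
Local Open Scope R_scope.
Lemma ln_step_R (x : R) : 0 < x -> ln (x + 1) - ln x <= / x.
Proof.
move=> x0.
have e : (x + 1 = x * (1 + / x)) by field; apply: Rgt_not_eq.
have p : (0 < 1 + / x) by have := Rinv_0_lt_compat x x0; lra.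
rewrite e (ln_mult _ _ x0 p).
have := ln_increasing (1 + / x) (exp (/x)) p (exp_ineq1 _ (Rgt_not_eq _ _ (Rinv_0_lt_compat x x0))).
rewrite ln_exp; lra.
Qed.
Lemma IZR2' : IZR 2 = R1 + R1.
Proof. ring. Qed.
End StdLn.

Local Open Scope ring_scope.
Lemma ln_step (x : R) : 0 < x -> ln (x + 1) - ln x <= x^-1.
Proof. by move/RltP=> x0; apply/RleP; have := @ln_step_R x x0; rewrite RinvE RminusE RplusE. Qed.

Lemma IZR2 : IZR 2 = 2%:R :> R.
Proof. by rewrite IZR2' RplusE. Qed.

Lemma ln_pos_nat (m : nat) : (0 < m)%N -> 0 < (m%:R : R).
Proof. by move=> h; rewrite ltr0n. Qed.

Lemma harm_ln (m : nat) : (0 < m)%N -> ln 2 <= \sum_(m <= x < m.*2) (x%:R : R)^-1.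
Proof.
move=> m0.
have -> : ln 2 = ln ((m.*2)%:R) - ln (m%:R).
  have e : (m.*2)%:R = RbaseSymbolsImpl.Rmult (IZR 2) (m%:R) :> R.
    by rewrite RmultE IZR2 -mul2n natrM.
  rewrite e ln_mult; last by apply/RltP; rewrite ltr0n.
    by rewrite RplusE addrK.
  by apply/RltP; rewrite IZR2 ltr0n.
rewrite -(telescope_sumr (fun k => ln (k%:R))); last by rewrite -addnn leq_addr.
apply: ler_sum_nat => k /andP [mk _].
have k0 : 0 < (k%:R : R) by rewrite ltr0n; apply: leq_trans mk.
by rewrite -natr1 ln_step.
Qed.


From mathcomp Require Import all_fingroup.
From mathcomp Require Import ring lra zify.
Import Order.TTheory GRing.Theory Num.Theory.
Set Implicit Arguments. Unset Strict Implicit.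
Local Open Scope ring_scope.

Section Generic.
Variables (J n : nat).
Local Notation I := 'I_J.
Local Notation T := 'I_n.
Local Notation FF := {ffun 'I_J -> 'I_n}.

Definition upd (d : FF) (k : I) (x : T) : FF := [ffun j => if j == k then x else d j].

Lemma upd_same d k x : upd d k x k = x.
Proof. by rewrite ffunE eqxx. Qed.
Lemma upd_upd d k x y : upd (upd d k x) k y = upd d k y.
Proof. by apply/ffunP => j; rewrite !ffunE; case: eqP. Qed.
Lemma upd_id d k : upd d k (d k) = d.
Proof. by apply/ffunP => j; rewrite !ffunE; case: eqP => // ->. Qed.

Definition indR (b : bool) : R := if b then 1 else 0.

Lemma swap_sum k (c : T) (P : FF -> R) (t : FF -> T) :
  (forall d x, P (upd d k x) = P d) -> (forall d x, t (upd d k x) = t d) ->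
  \sum_d P d * indR (d k == t d) = \sum_d P d * indR (d k == c).
Proof.
move=> HP Ht.
pose s d := upd d k (tperm c (t d) (d k)).
have sK : involutive s.
  by move=> d; rewrite /s Ht upd_same upd_upd tpermK upd_id.
rewrite (reindex_inj (inv_inj sK)); apply: eq_bigr => d _.
rewrite /s HP Ht upd_same; congr (_ * indR _).
apply/idP/idP => /eqP h; apply/eqP.
  by apply: (@perm_inj _ (tperm c (t d))); rewrite h tpermL.
by rewrite h tpermL.
Qed.

Lemma sum_fix k c (f : I -> T -> R) :
  \sum_(d : FF) (\prod_(j | j != k) f j (d j)) * indR (d k == c)
  = \prod_(j | j != k) \sum_x f j x.
Proof.
pose g j x := if j == k then indR (x == c) else f j x.
transitivity (\sum_(d : FF) \prod_j g j (d j)).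
  apply: eq_bigr => d _; rewrite [in RHS](bigD1 k) //= {1}/g /= eqxx mulrC; congr (_ * _).
  by apply: eq_bigr => j /negbTE jk; rewrite /g jk.
rewrite -bigA_distr_bigA (bigD1 k) //= {1}/g /= eqxx.
have -> : \sum_x indR (x == c) = 1.
  by rewrite /indR -big_mkcond /= big_pred1_eq.
by rewrite mul1r; apply: eq_bigr => j /negbTE jk; rewrite /g jk.
Qed.

Definition sgm (d : FF) (A : {set I}) : nat := (\sum_(i in A) (d i : nat))%N.
Definition G (f : I -> T -> R) A A' :=
  \sum_(d : FF) (\prod_j f j (d j)) * indR (sgm d A == sgm d A').

Lemma G_bound (f : I -> T -> R) (M : I -> R) (c : T) (A A' : {set I}) (k : I) :
  (forall j x, 0 <= f j x) -> (forall x, f k x <= M k) -> k \in A -> k \notin A' ->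
  G f A A' <= M k * \prod_(j | j != k) \sum_x f j x.
Proof.
move=> f0 fM kA kA'.
pose h d := (sgm d A' - sgm d (A :\ k))%N.
pose t d : T := insubd c (h d).
pose P (d : FF) := \prod_(j | j != k) f j (d j).
have HP : forall d x, P (upd d k x) = P d.
  by move=> d x; apply: eq_bigr => j /negbTE jk; rewrite ffunE jk.
have Hsig : forall (B : {set I}) d x, k \notin B -> sgm (upd d k x) B = sgm d B.
  move=> B d x kB; apply: eq_bigr => i iB; rewrite ffunE; case: eqP => // ik.
  by move: kB; rewrite -ik iB.
have Ht : forall d x, t (upd d k x) = t d.
  by move=> d x; rewrite /t /h !Hsig // setD11.
have M0 : 0 <= M k := le_trans (f0 k c) (fM c).
have P0 : forall d, 0 <= P d by move=> d; apply: prodr_ge0 => j _.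
apply: (@le_trans _ _ (\sum_d P d * M k * indR (d k == t d))).
  apply: ler_sum => d _; rewrite (bigD1 k) //= -/(P d) /indR.
  case: ifP => [/eqP e|_]; last first.
    by rewrite mulr0; case: ifP; rewrite ?mulr1 ?mulr0 // mulr_ge0.
  have -> : d k == t d.
    have hv : val (d k) = h d by rewrite /h -e /sgm (big_setD1 _ kA) /= addnK.
    by apply/eqP/val_inj; rewrite /t val_insubd -hv ltn_ord.
  by rewrite mulr1 mulr1 mulrC ler_wpM2l.
rewrite (eq_bigr (fun d => M k * (P d * indR (d k == t d)))); last first.
  by move=> d _; rewrite mulrAC mulrC.
by rewrite -mulr_sumr (swap_sum c HP Ht) sum_fix.
Qed.

Definition sd (A B : {set I}) := (A :\: B) :|: (B :\: A).

Lemma G_bound_sd (f : I -> T -> R) (M : I -> R) (c : T) (A A' : {set I}) (k : I) :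
  (forall j x, 0 <= f j x) -> (forall x, f k x <= M k) -> k \in sd A A' ->
  G f A A' <= M k * \prod_(j | j != k) \sum_x f j x.
Proof.
move=> f0 fM; rewrite !inE => /orP [/andP [kA' kA]|/andP [kA kA']].
  exact: (G_bound c f0 fM kA kA').
have -> : G f A A' = G f A' A.
  by apply: eq_bigr => d _; rewrite eq_sym.
exact: (G_bound c f0 fM kA' kA).
Qed.

Lemma sd_inv (A : {set I}) : involutive (sd A).
Proof. by move=> C; apply/setP => x; rewrite !inE; case: (x \in A); case: (x \in C). Qed.

Lemma sd_set0 (A : {set I}) : sd A set0 = A.
Proof. by apply/setP => x; rewrite !inE; case: (x \in A). Qed.

Definition Pk (k : I) : {set I} := [set j : I | (j <= k)%N].

Lemma card_Pk k : (#|Pk k| <= k.+1)%N.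
Proof.
rewrite cardE -(size_map val) -(size_iota 0 k.+1).
apply: uniq_leq_size; first by rewrite map_inj_uniq ?enum_uniq //; apply: val_inj.
move=> x /mapP [y]; rewrite mem_enum inE => yk ->.
by rewrite mem_iota /= add0n ltnS.
Qed.

Lemma card_setI : #|{set I}| = (2 ^ J)%N.
Proof. by rewrite -cardsT -powersetT card_powerset cardsT card_ord. Qed.

Lemma sum_sub (P : {set I}) : \sum_(C : {set I}) indR (C \subset P) = (2 ^ #|P|)%:R.
Proof.
rewrite /indR -big_mkcond /=.
rewrite (eq_bigl (fun C => C \in powerset P)); last by move=> C; rewrite powersetE.
by rewrite sumr_const card_powerset.
Qed.

Lemma Q_bound (f : I -> T -> R) (M : I -> R) (c : T) :
  (forall j x, 0 <= f j x) -> (forall k x, f k x <= M k) ->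
  (forall k, 2^-1 <= \sum_x f k x) ->
  \sum_(A : {set I}) \sum_(A' : {set I}) G f A A' <=
    (2 ^ J)%:R * ((\prod_j \sum_x f j x) +
       2 * (\prod_j \sum_x f j x) * \sum_(k : I) M k * (2 ^ k.+1)%:R).
Proof.
move=> f0 fM Hh.
set S := \prod_j \sum_x f j x.
have S0 : 0 <= S by apply: prodr_ge0 => j _; apply: sumr_ge0 => x _.
have M0 : forall k, 0 <= M k by move=> k; exact: le_trans (f0 k c) (fM k c).
have HS : forall k, \prod_(j | j != k) \sum_x f j x <= 2 * S.
  move=> k; rewrite /S [X in _ <= _ * X](bigD1 k) //= mulrA.
  have p0 : 0 <= \prod_(j | j != k) \sum_x f j x.
    by apply: prodr_ge0 => j _; apply: sumr_ge0 => x _.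
  rewrite -[X in X <= _]mul1r ler_wpM2r //.
  have := Hh k; rewrite -(ler_pM2l (x := 2)) ?ltr0n // divff ?pnatr_eq0 //.
have GAA : forall A, G f A A = S.
  move=> A; rewrite /G /S bigA_distr_bigA; apply: eq_bigr => d _.
  by rewrite eqxx /indR mulr1.
set X := S + _.
have pos : forall k, 0 <= M k * (2 * S) by move=> k; rewrite !mulr_ge0 ?ler0n.
have perA : forall A : {set I}, \sum_(A' : {set I}) G f A A' <= X.
  move=> A.
  rewrite (reindex_inj (inv_inj (sd_inv A))) /= (bigD1 set0) //= sd_set0 GAA.
  rewrite /X lerD2l.
  apply: (@le_trans _ _ (\sum_(C : {set I}) \sum_(k : I)
             indR (C \subset Pk k) * (M k * (2 * S)))).
    rewrite [X in _ <= X](bigD1 set0) //= -[X in X <= _]add0r.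
    apply: lerD; first by apply: sumr_ge0 => k _; rewrite /indR; case: ifP => _;
      rewrite ?mul0r ?mul1r //; exact: pos.
    apply: ler_sum => C CP.
    have [i0 i0C] : exists i0, i0 \in C by apply/set0Pn.
    case: (@arg_maxnP _ i0 (fun i => i \in C) (fun i => nat_of_ord i) i0C) => k0 k0C kmax.
    have k0sd : k0 \in sd A (sd A C) by rewrite sd_inv.
    apply: (@le_trans _ _ (M k0 * (2 * S))).
      apply: (le_trans (G_bound_sd c f0 (fM k0) k0sd)).
      by rewrite ler_wpM2l.
    rewrite (bigD1 k0) //= -[X in X <= _]addr0 /indR.
    have -> : C \subset Pk k0 by apply/subsetP => j jC; rewrite inE; exact: kmax.
    rewrite mul1r lerD2l; apply: sumr_ge0 => k _; case: ifP => _;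
      rewrite ?mul0r ?mul1r //; exact: pos.
  rewrite exchange_big /= mulr_sumr; apply: ler_sum => k _.
  rewrite -mulr_suml sum_sub.
  rewrite [X in _ <= X]mulrC mulrA [X in _ <= X]mulrC -!mulrA.
  rewrite [X in X <= _]mulrC.
  have -> : 2 * (S * (M k * (2 ^ k.+1)%:R)) = M k * (2 * S) * (2 ^ k.+1)%:R by ring.
  by rewrite ler_wpM2l // ler_nat leq_pexp2l // card_Pk.
apply: (@le_trans _ _ (\sum_(A : {set I}) X)); first exact: ler_sum.
by rewrite sumr_const card_setI mulr_natl.
Qed.


Lemma size_sum (s : seq nat) : (size s)%:R = \sum_(x <- s) (1 : R).
Proof. by elim: s => [|a s IH]; rewrite ?big_nil ?big_cons //= -add1n natrD IH. Qed.

Lemma pick_seq (L : seq nat) x (F : nat -> R) : uniq L -> x \in L ->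
  \sum_(s <- L) indR (x == s) * F s = F x.
Proof.
move=> uL xL; rewrite (big_rem x) //= eqxx /indR mul1r.
rewrite big1_seq ?addr0 // => s /andP [_ sr].
move: sr; rewrite mem_rem_uniq // inE => /andP [sx _].
by rewrite eq_sym (negbTE sx) mul0r.
Qed.

Definition Ed (d : FF) : R := \sum_(A : {set I}) \sum_(A' : {set I}) indR (sgm d A == sgm d A').

Lemma size_lb (d : FF) (Tt : R) : 0 < Tt ->
  2 * (2 ^ J)%:R / Tt - Ed d / Tt ^+ 2 <=
  (size (subset_sums (fun k => nat_of_ord (d k))))%:R.
Proof.
move=> T0.
set L := subset_sums _.
have uL : uniq L by apply: undup_uniq.
have inL : forall A, sgm d A \in L.
  move=> A; rewrite mem_undup; apply/mapP; exists A => //; by rewrite mem_enum.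
pose N s := \sum_(A : {set I}) indR (sgm d A == s).
have e1 : \sum_(s <- L) N s = (2 ^ J)%:R.
  rewrite exchange_big /= -card_setI -sumr_const.
  apply: eq_bigr => A _; rewrite (eq_bigr (fun s => indR (sgm d A == s) * 1)).
    by rewrite pick_seq.
  by move=> s _; rewrite mulr1.
have e2 : \sum_(s <- L) N s ^+ 2 = Ed d.
  rewrite (eq_bigr (fun s => \sum_(A : {set I}) \sum_(A' : {set I})
     indR (sgm d A == s) * indR (sgm d A' == s))); last first.
    by move=> s _; rewrite expr2 mulr_suml; apply: eq_bigr => A _; rewrite mulr_sumr.
  rewrite exchange_big /=; apply: eq_bigr => A _.
  rewrite exchange_big /=; apply: eq_bigr => A' _.
  by rewrite pick_seq // eq_sym.
rewrite size_sum -e1 -e2 mulr_sumr !mulr_suml -sumrB.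
apply: ler_sum => s _.
have Tn : Tt != 0 by rewrite gt_eqF.
rewrite -subr_ge0.
have -> : 1 - (2 * N s / Tt - N s ^+ 2 / Tt ^+ 2) = (1 - N s / Tt) ^+ 2.
  by field.
exact: sqr_ge0.
Qed.

End Generic.


Lemma exists_block (p : nat -> nat) k m :
  (p 0 <= k)%N -> (k < p m)%N -> exists2 i, (i < m)%N & (p i <= k < p i.+1)%N.
Proof.
move=> h0; elim: m => [|m IH] hk; first by move: (leq_ltn_trans h0 hk); rewrite ltnn.
case: (ltnP k (p m)) => h.
  by case: (IH h) => i im hi; exists i => //; apply: ltnW.
by exists m => //; rewrite h hk.
Qed.

Section Block.
Variables (J : nat) (b : 'I_J -> nat).
Hypothesis Hb : (\sum_(j < J) b j)%N = J.

Lemma psum_mono i j : (i <= j)%N -> (psum b i <= psum b j)%N.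
Proof.
move=> ij; rewrite /psum !(big_mkcond (fun k : 'I_J => (k < _)%N)) /=.
apply: leq_sum => k _; case: ifP => // h.
by rewrite (leq_trans h ij).
Qed.

Lemma psum0 : psum b 0 = 0%N.
Proof. by rewrite /psum big_pred0. Qed.

Lemma psumJ : psum b J = J.
Proof. by rewrite /psum -[RHS]Hb; apply: eq_bigl => j; rewrite ltn_ord. Qed.

Definition beta (k : 'I_J) : 'I_J :=
  odflt k [pick i : 'I_J | (psum b i <= k < psum b i.+1)%N].

Lemma betaP (k : 'I_J) : (psum b (beta k) <= k < psum b (beta k).+1)%N.
Proof.
rewrite /beta; case: pickP => [i //|none].
have [i iJ hi] : exists2 i, (i < J)%N & (psum b i <= k < psum b i.+1)%N.
  by apply: exists_block; rewrite ?psum0 ?psumJ.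
by move: (none (Ordinal iJ)); rewrite /= hi.
Qed.

Lemma beta_uniq (k : 'I_J) (i : nat) : (psum b i <= k < psum b i.+1)%N -> nat_of_ord (beta k) = i.
Proof.
move=> /andP [h1 h2]; have /andP [g1 g2] := betaP k.
case: (ltngtP (beta k) i) => // h.
  have := psum_mono h; lia.
have := psum_mono h; lia.
Qed.

Definition blk (i x : nat) := (2 ^ i <= x < 2 ^ i.+1)%N.

Lemma inD_beta (d : {ffun 'I_J -> 'I_(2 ^ J)}) :
  inD b d = [forall k, blk (beta k) (d k)].
Proof.
apply/forallP/forallP.
  move=> H k; have /forallP/(_ k)/implyP := H (beta k); apply; exact: betaP.
move=> H i; apply/forallP => k; apply/implyP => hik.
have e : beta k = i by apply: val_inj; apply: beta_uniq.
by have := H k; rewrite e.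
Qed.

Local Open Scope ring_scope.

Definition fw (k : 'I_J) (x : 'I_(2 ^ J)) : R :=
  if blk (beta k) x then (x%:R)^-1 else 0.
Definition Mw (k : 'I_J) : R := ((2 ^ beta k)%:R)^-1.

Lemma fw_ge0 k x : 0 <= fw k x.
Proof. by rewrite /fw; case: ifP => // _; rewrite invr_ge0 ler0n. Qed.

Lemma fw_M k x : fw k x <= Mw k.
Proof.
rewrite /fw /Mw; case: ifP => [/andP [h1 _]|_]; last by rewrite invr_ge0 ler0n.
have p : (0 < 2 ^ beta k)%N by rewrite expn_gt0.
by rewrite lef_pV2 ?posrE ?ltr0n ?ler_nat //; apply: leq_trans h1.
Qed.

Lemma fw_sum k : \sum_x fw k x = \sum_(2 ^ beta k <= x < (2 ^ beta k).*2) (x%:R : R)^-1.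
Proof.
set m := (2 ^ beta k)%N.
have m2 : (m.*2 <= 2 ^ J)%N.
  by rewrite /m -mul2n -expnS leq_pexp2l.
have mm : (m <= m.*2)%N by rewrite -addnn leq_addr.
rewrite /fw -(big_mkord xpredT (fun x : nat => if blk (beta k) x then (x%:R : R)^-1 else 0)).
rewrite (big_cat_nat _ (n := m)) //=; last by apply: leq_trans mm m2.
rewrite (big_cat_nat _ (n := m.*2) (m := m)) //=.
rewrite big1_seq ?add0r; last first.
  by move=> x /andP [_]; rewrite mem_index_iota /blk -/m => /andP [_ h]; rewrite leqNgt h.
rewrite [X in _ + X]big1_seq ?addr0; last first.
  move=> x /andP [_]; rewrite mem_index_iota /blk -/m expnS mul2n => /andP [h _].
  by rewrite ltnNge h andbF.
apply: eq_big_nat => x; rewrite /blk -/m expnS mul2n => ->; done.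
Qed.

Lemma fw_sum_ln k : ln 2 <= \sum_x fw k x.
Proof. by rewrite fw_sum; apply: harm_ln; rewrite expn_gt0. Qed.

Lemma half_ln2 : 2^-1 <= ln 2.
Proof. have := ln_lt_2; move/RltP; rewrite RinvE IZR2 => h; exact: ltW. Qed.

Lemma fw_sum_half k : 2^-1 <= \sum_x fw k x.
Proof. exact: le_trans half_ln2 (fw_sum_ln k). Qed.

Definition Dsum : R := \sum_(i < J) (2 : R) ^ ((psum b i.+1)%:Z - (i.+1)%:Z).

Lemma Dterm (p i : nat) : (2 : R) ^ (p%:Z - (i.+1)%:Z) = (2 ^ p)%:R / (2 ^ i.+1)%:R.
Proof.
rewrite IZR2 expfzDr ?pnatr_eq0 // -exprnP -exprnN !natrX //.
Qed.

Lemma D_ge1 : (1 <= J)%N -> 1 <= Dsum.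
Proof.
move=> J1; rewrite /Dsum.
have Jm : (J.-1 < J)%N by rewrite prednK.
rewrite (bigD1 (Ordinal Jm)) //= -[X in X <= _]addr0.
apply: lerD; last by apply: sumr_ge0 => i _; apply: exprz_ge0; rewrite IZR2 ler0n.
by rewrite prednK // psumJ subrr expr0z.
Qed.

Lemma geo_nat (n p : nat) :
  (\sum_(k < n) (if (k < p)%N then 2 ^ k else 0) = 2 ^ (minn n p) - 1)%N.
Proof.
elim: n => [|n IH]; first by rewrite big_ord0 min0n.
rewrite big_ord_recr /= IH.
case: (ltnP n p) => h.
  rewrite (minn_idPl h) expnS.
  have := expn_gt0 2 n; lia.
by rewrite (minn_idPr (leqW h)) addn0.
Qed.

Lemma Mk_bound : \sum_(k : 'I_J) Mw k * (2 ^ k.+1)%:R <= 4 * Dsum.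
Proof.
rewrite (partition_big beta xpredT) //= /Dsum mulr_sumr.
apply: ler_sum => i _.
rewrite (eq_bigr (fun k : 'I_J => ((2 ^ i)%:R)^-1 * (2 ^ k.+1)%:R)); last first.
  by move=> k /eqP <-.
rewrite -mulr_sumr -natr_sum Dterm.
set p := psum b i.+1.
have H1 : (\sum_(k < J | beta k == i) 2 ^ k.+1 <= 2 ^ p.+1)%N.
  apply: (@leq_trans (\sum_(k < J) (if (k < p)%N then 2 ^ k.+1 else 0))).
    rewrite big_mkcond /=; apply: leq_sum => k _; case: ifP => // /eqP bk.
    by have := betaP k; rewrite bk => /andP [_ ->].
  rewrite (eq_bigr (fun k : 'I_J => 2 * (if (k < p)%N then 2 ^ k else 0))%N); last first.
    by move=> k _; case: ifP; rewrite ?muln0 // expnS.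
  rewrite -big_distrr /= geo_nat expnS leq_mul2l /=.
  by apply: leq_trans (leq_subr _ _) _; rewrite leq_pexp2l // geq_minr.
apply: (@le_trans _ _ (((2 ^ i)%:R)^-1 * (2 ^ p.+1)%:R)).
  by rewrite ler_wpM2l ?invr_ge0 ?ler0n // ler_nat.
rewrite !expnS !natrM invfM.
have h2 : (2%:R : R) != 0 by rewrite pnatr_eq0.
have hi : ((2 ^ i)%:R : R) != 0 by rewrite pnatr_eq0 expn_eq0.
by rewrite le_eqVlt; apply/orP; left; apply/eqP; field.
Qed.
End Block.


Theorem lemma4p1 :
  exists c : R, 0 < c /\
  forall (J : nat) (b : 'I_J -> nat),
    (1 <= J)%N -> (\sum_(j < J) b j)%N = J ->
    c * (2 * ln 2) ^+ J
      / (\sum_(i < J) (2 : R) ^ ((psum b i.+1)%:Z - (i.+1)%:Z))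
    <= \sum_(d : {ffun 'I_J -> 'I_(2 ^ J)} | inD b d)
         (size (subset_sums (fun k => nat_of_ord (d k))))%:R
           / (\prod_(k < J) (nat_of_ord (d k))%:R).
Proof.
exists (9^-1); split; first by rewrite invr_gt0 ltr0n.
move=> J b J1 Hb.
change (\sum_(i < J) (2 : R) ^ ((psum b i.+1)%:Z - (i.+1)%:Z)) with (Dsum b).
have c0 : (0 < 2 ^ J)%N by rewrite expn_gt0.
pose c : 'I_(2 ^ J) := Ordinal c0.
pose W (d : {ffun 'I_J -> 'I_(2 ^ J)}) := \prod_k fw b k (d k).
pose Lsz (d : {ffun 'I_J -> 'I_(2 ^ J)}) : R := (size (subset_sums (fun k => nat_of_ord (d k))))%:R.
have -> : \sum_(d : {ffun 'I_J -> 'I_(2 ^ J)} | inD b d) Lsz d / (\prod_(k < J) (nat_of_ord (d k))%:R)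
   = \sum_d W d * Lsz d.
  rewrite big_mkcond; apply: eq_bigr => d _.
  case: ifP => hd.
    rewrite mulrC /W -prodfV; congr (_ * _); apply: eq_bigr => k _.
    move: hd; rewrite (inD_beta Hb) => /forallP /(_ k).
    by rewrite /fw => ->.
  move: hd => /negbT; rewrite (inD_beta Hb) negb_forall => /existsP [k hk].
  by rewrite /W (bigD1 k) //= /fw (negbTE hk) !mul0r.
set S := \prod_k \sum_x fw b k x.
set D := Dsum b.
have D1 : 1 <= D by apply: D_ge1.
have D0 : 0 < D by apply: lt_le_trans D1; rewrite ltr01.
have S0 : 0 <= S by apply: prodr_ge0 => k _; apply: sumr_ge0 => x _; apply: fw_ge0.
have SW : \sum_d W d = S by rewrite /S bigA_distr_bigA.
have W0 : forall d, 0 <= W d by move=> d; apply: prodr_ge0 => k _; apply: fw_ge0.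
set Tt : R := 9%:R * D.
have T0 : 0 < Tt by rewrite mulr_gt0 // ltr0n.
have step1 : \sum_d W d * (2 * (2 ^ J)%:R / Tt - Ed d / Tt ^+ 2) <= \sum_d W d * Lsz d.
  by apply: ler_sum => d _; rewrite ler_wpM2l // size_lb.
have QE : \sum_d W d * Ed d = \sum_(A : {set 'I_J}) \sum_(A' : {set 'I_J}) G (fw b) A A'.
  rewrite /Ed (eq_bigr (fun d => \sum_(A : {set 'I_J}) \sum_(A' : {set 'I_J})
     W d * indR (sgm d A == sgm d A'))); last first.
    by move=> d _; rewrite mulr_sumr; apply: eq_bigr => A _; rewrite mulr_sumr.
  rewrite exchange_big /=; apply: eq_bigr => A _.
  by rewrite exchange_big.
have Qb := Q_bound c (@fw_ge0 J b) (@fw_M J b) (@fw_sum_half J b).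
have Qb2 : \sum_d W d * Ed d <= (2 ^ J)%:R * (S + 8 * S * D).
  rewrite QE; apply: (le_trans Qb); rewrite -/S ler_wpM2l ?ler0n // lerD2l.
  have -> : 8 * S * D = 2 * S * (4 * D) by ring.
  by rewrite ler_wpM2l ?mulr_ge0 ?ler0n // Mk_bound.
have Sln : (ln 2) ^+ J <= S.
  rewrite /S -[J in _ ^+ J]card_ord -prodr_const.
  apply: ler_prod => k _; rewrite fw_sum_ln andbT.
  by apply: le_trans _ half_ln2; rewrite invr_ge0 ler0n.
apply: le_trans step1.
set a := 2 * (2 ^ J)%:R / Tt.
have e : \sum_d W d * (a - Ed d / Tt ^+ 2) = a * S - (\sum_d W d * Ed d) / Tt ^+ 2.
  rewrite -SW mulr_sumr mulr_suml -sumrB; apply: eq_bigr => d _; ring.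
rewrite e.
apply: (@le_trans _ _ (a * S - (2 ^ J)%:R * (S + 8 * S * D) / Tt ^+ 2)); last first.
  by rewrite lerD2l lerN2 ler_pM2r // invr_gt0 exprn_gt0.
set x : R := (2 ^ J)%:R.
set y := ln 2 ^+ J.
have x0 : 0 <= x by rewrite ler0n.
have -> : (2 * ln 2) ^+ J = x * y by rewrite exprMn /x natrX.
rewrite /a /Tt -subr_ge0.
have Dn : D != 0 by rewrite gt_eqF.
have -> : 2 * x / (9%:R * D) * S - x * (S + 8 * S * D) / (9%:R * D) ^+ 2 - 9^-1 * (x * y) / D
   = x / (81%:R * D ^+ 2) * (9%:R * D * (S - y) + S * (D - 1)).
  by field.
apply: mulr_ge0; first by rewrite divr_ge0 // mulr_ge0 ?ler0n // exprn_ge0 // ltW.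
apply: addr_ge0; apply: mulr_ge0 => //.
- by rewrite mulr_ge0 ?ler0n // ltW.
- by rewrite subr_ge0.
- by rewrite subr_ge0.
Qed.
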